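(* Let $S_5\subseteq G^5$ be the stabilizer group generated by $g_1=X\otimes Z\otimes Z\otimes X\otimes I$, $g_2=I\otimes X\otimes Z\otimes Z\otimes X$, $g_3=X\otimes I\otimes X\otimes Z\otimes Z$, $g_4=Z\otimes X\otimes I\otimes X\otimes Z$. Each $\epsilon\in\mathbb{F}_2^4$ is the syndrome of exactly one element of $\{I^{\otimes5}\}\cup\{\text{single-qubit }X,Y,Z\text{ errors}\}$ (16 elements); let $\phi(\epsilon)$ be that element. Then, with this $\phi$, $f_{S_5}(0)=f_{S_5}(1)=1$, $f_{S_5}(2)=\tfrac{7}{16}$, and $f_{S_5}(t)=0$ for $t=3,4,5$.
   Context: $X=\begin{pmatrix}0&1\\1&0\end{pmatrix}$, $Y=\begin{pmatrix}0&1\\-1&0\end{pmatrix}$, $Z=\begin{pmatrix}1&0\\0&-1\end{pmatrix}$. For a stabilizer group $S\subseteq G^n$ (abelian subgroup of the $n$-qubit Pauli group not containing $-I$) with independent generators $g_1,\dots,g_r$, the syndrome of a Pauli operator $g$ is $\epsilon(g)\in\mathbb{F}_2^r$, $\epsilon_i(g)=0$ if $g$ commutes with $g_i$ and $1$ if it anticommutes. For $\{m\}\subseteq\{1,\dots,n\}$, $P^{\{m\}}$ is the set of tensor products that are one of $I,X,Y,Z$ on each qubit of $\{m\}$ and $I$ elsewhere. Given an error correcting function $\phi:\mathbb{F}_2^r\to G^n$, call a syndrome $\epsilon\in\Sigma_{\{m\}}:=\{\epsilon(g):g\in P^{\{m\}}\}$ good for $\{m\}$ if $\phi(\epsilon)g\in\{\lambda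 s:s\in S,\lambda\in\{\pm1,\pm i\}\}$ for every $g\in P^{\{m\}}$ with $\epsilon(g)=\epsilon$. Define, for $t=0,\dots,n$, $$f_S(t)=\binom{n}{t}^{-1}\sum_{|\{m\}|=t}\frac{|\{\epsilon\in\Sigma_{\{m\}}:\epsilon\text{ good for }\{m\}\}|}{|\Sigma_{\{m\}}|},$$ the sum over all $t$-element subsets $\{m\}$; this is the probability that a random error affecting $t$ randomly located qubits is corrected. *)

(* Defs.v *)
From HB Require Import structures.
From mathcomp Require Import all_boot all_order all_algebra.
Set Implicit Arguments. Unset Strict Implicit. Unset Printing Implicit Defensive.
Import GRing.Theory.
Local Open Scope ring_scope.

Inductive letter := PI | PX | PY | PZ.

Definition letter_to (a : letter) : 'I_4 :=
  match a with PI => inord 0 | PX => inord 1 | PY => inord 2 | PZ => inord 3 end.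
Definition letter_of (k : 'I_4) : letter :=
  match val k with 0 => PI | 1 => PX | 2 => PY | _ => PZ end.
Lemma letter_toK : cancel letter_to letter_of.
Proof. by case; rewrite /letter_of /= inordK. Qed.
HB.instance Definition _ := Finite.copy letter (can_type letter_toK).

(* The paper's 2x2 matrices (all entries are integers; note Y = [[0,1],[-1,0]]). *)
Definition letter_mx (a : letter) : 'M[int]_2 :=
  \matrix_(i < 2, j < 2)
   match a with
   | PI => if i == j then 1 else 0
   | PX => if i == j then 0 else 1
   | PY => if i == j then 0 else (if val i == 0%N then 1 else -1)
   | PZ => if i == j then (if val i == 0%N then 1 else -1) else 0
   end.

(* Product of letters: a * b = i^k c, returned as (k, c) with k in Z/4.
   Computed from the matrices above: XX=ZZ=I, YY=-I, XY=-Z, YX=Z,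
   XZ=-Y, ZX=Y, YZ=-X, ZY=X. *)
Definition lmul (a b : letter) : 'Z_4 * letter :=
  match a, b with
  | PI, c | c, PI => (0, c)
  | PX, PX => (0, PI) | PZ, PZ => (0, PI) | PY, PY => (2%:R, PI)
  | PX, PY => (2%:R, PZ) | PY, PX => (0, PZ)
  | PX, PZ => (2%:R, PY) | PZ, PX => (0, PY)
  | PY, PZ => (2%:R, PX) | PZ, PY => (0, PX)
  end.

Lemma lmul_spec a b :
  letter_mx a *m letter_mx b =
  (if (lmul a b).1 == 0 then 1 else -1) *: letter_mx (lmul a b).2.
Proof.
by case: a; case: b; apply/matrixP => i j; rewrite !mxE !big_ord_recl big_ord0 !mxE;
  case: i => [[|[|//]] Hi]; case: j => [[|[|//]] Hj]; rewrite /= ?mulr1 ?mulr0.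
Qed.

(* An element of the n-qubit Pauli group G^n: i^k * (w_0 (x) ... (x) w_{n-1}). *)
Definition pauli n := ('Z_4 * {ffun 'I_n -> letter})%type.

Definition pmul n (g h : pauli n) : pauli n :=
  (g.1 + h.1 + \sum_(j < n) (lmul (g.2 j) (h.2 j)).1,
   [ffun j => (lmul (g.2 j) (h.2 j)).2]).

Definition pone n : pauli n := (0, [ffun=> PI]).
Definition pscale n (k : 'Z_4) (g : pauli n) : pauli n := (k + g.1, g.2).

Definition pcommute n (g h : pauli n) : bool := pmul g h == pmul h g.

(* The subgroup of G^n generated by the generators gens (G^n is finite, so
   the smallest submonoid containing gens is the generated subgroup). *)
Definition mul_closed n (A : {set pauli n}) : bool :=
  (pone n \in A) && [forall g in A, forall h in A, pmul g h \in A].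

Definition gen_group n r (gens : 'I_r -> pauli n) : {set pauli n} :=
  \bigcap_(A : {set pauli n} | mul_closed A && [forall i, gens i \in A]) A.

Definition syndrome n r (gens : 'I_r -> pauli n) (g : pauli n) : {ffun 'I_r -> bool} :=
  [ffun i => ~~ pcommute g (gens i)].

Definition Pset n (m : {set 'I_n}) : {set pauli n} :=
  [set g : pauli n | (g.1 == 0) && [forall j, (j \notin m) ==> (g.2 j == PI)]].

Definition Sigma n r (gens : 'I_r -> pauli n) (m : {set 'I_n}) : {set {ffun 'I_r -> bool}} :=
  [set syndrome gens g | g in Pset m].

Definition in_S_up_to_phase n r (gens : 'I_r -> pauli n) (x : pauli n) : bool :=
  [exists k : 'Z_4, exists s in gen_group gens, x == pscale k s].

Definition good n r (gens : 'I_r -> pauli n) (phi : {ffun 'I_r -> bool} -> pauli n)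
  (m : {set 'I_n}) (e : {ffun 'I_r -> bool}) : bool :=
  (e \in Sigma gens m) &&
  [forall g in Pset m, (syndrome gens g == e) ==> in_S_up_to_phase gens (pmul (phi e) g)].

Definition fS n r (gens : 'I_r -> pauli n) (phi : {ffun 'I_r -> bool} -> pauli n)
  (t : nat) : rat :=
  (\sum_(m : {set 'I_n} | #|m| == t)
      (#|[set e in Sigma gens m | good gens phi m e]|%:R / #|Sigma gens m|%:R))
  / 'C(n, t)%:R.

Definition word5 (a0 a1 a2 a3 a4 : letter) : {ffun 'I_5 -> letter} :=
  [ffun j : 'I_5 => nth PI [:: a0; a1; a2; a3; a4] j].

Definition gens5 (i : 'I_4) : pauli 5 :=
  (0, match val i with
      | 0 => word5 PX PZ PZ PX PI
      | 1 => word5 PI PX PZ PZ PX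
      | 2 => word5 PX PI PX PZ PZ
      | _ => word5 PZ PX PI PX PZ
      end).

Definition single n (j : 'I_n) (a : letter) : pauli n :=
  (0, [ffun k => if k == j then a else PI]).

Definition E5 : {set pauli 5} :=
  pone 5 |: [set single ja.1 ja.2 | ja : 'I_5 * letter & ja.2 != PI].

(* phi(eps) = the element of E5 with syndrome eps (identity if none) *)
Definition phi5 (e : {ffun 'I_4 -> bool}) : pauli 5 :=
  odflt (pone 5) [pick g in E5 | syndrome gens5 g == e].

(* Main.v *)
Require Import Defs.
From mathcomp Require Import all_boot all_order all_algebra.
Import GRing.Theory.
Local Open Scope ring_scope.

Definition ords5 : seq 'I_5 :=
  [:: @Ordinal 5 0 isT; @Ordinal 5 1 isT; @Ordinal 5 2 isT; @Ordinal 5 3 isT; @Ordinal 5 4 isT].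
Definition ords4 : seq 'I_4 :=
  [:: @Ordinal 4 0 isT; @Ordinal 4 1 isT; @Ordinal 4 2 isT; @Ordinal 4 3 isT].

Lemma enum5 : enum 'I_5 = ords5.
Proof. apply: (inj_map val_inj). by rewrite val_enum_ord. Qed.
Lemma enum4 : enum 'I_4 = ords4.
Proof. apply: (inj_map val_inj). by rewrite val_enum_ord. Qed.
Lemma mem5 (i : 'I_5) : i \in ords5. Proof. by rewrite -enum5 mem_enum. Qed.
Lemma mem4 (i : 'I_4) : i \in ords4. Proof. by rewrite -enum4 mem_enum. Qed.

Definition code (a : letter) : nat := match a with PI => 0 | PX => 1 | PY => 2 | PZ => 3 end.
Definition uncode (n : nat) : letter := match n with 0 => PI | 1 => PX | 2 => PY | _ => PZ end.
Lemma codeK : cancel code uncode. Proof. by case. Qed.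
Lemma uncodeK n : (n < 4)%N -> code (uncode n) = n.
Proof. by case: n => [|[|[|[|]]]]. Qed.
Lemma code_lt a : (code a < 4)%N. Proof. by case: a. Qed.
Lemma codePI a : (a == PI) = (code a == 0)%N.
Proof. case: a => /=; rewrite ?eqxx //; apply/negbTE/eqP; discriminate. Qed.

Definition anti (a b : letter) : bool :=
  match a, b with
  | PI, _ | _, PI => false
  | PX, PX | PY, PY | PZ, PZ => false
  | _, _ => true end.
Definition antiN (x y : nat) := anti (uncode x) (uncode y).
Definition mulN (x y : nat) := code (lmul (uncode x) (uncode y)).2.

Lemma lmul2C a b : (lmul a b).2 = (lmul b a).2. Proof. by case: a; case: b. Qed.
Lemma lmul1C a b : (lmul a b).1 = (lmul b a).1 + (if anti a b then 2%:R else 0).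
Proof. by case: a; case: b; apply/eqP; vm_compute. Qed.

Definition enc (w : {ffun 'I_5 -> letter}) : seq nat := [seq code (w i) | i <- ords5].
Definition dec (c : seq nat) : {ffun 'I_5 -> letter} := [ffun i : 'I_5 => uncode (nth 0%N c i)].
Definition enc4 (e : {ffun 'I_4 -> bool}) : seq bool := [seq e i | i <- ords4].
Definition dec4 (c : seq bool) : {ffun 'I_4 -> bool} := [ffun i : 'I_4 => nth false c i].

Definition okw (c : seq nat) := (size c == 5%N) && all (fun x => x < 4)%N c.

Lemma enc_inj : injective enc.
Proof.
move=> w w' /eq_in_map H; apply/ffunP => i.
by apply: (can_inj codeK); apply: H (mem5 i).
Qed.
Lemma enc4_inj : injective enc4.
Proof. by move=> w w' /eq_in_map H; apply/ffunP => i; apply: H (mem4 i). Qed.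

Lemma map_ords5 T (f : nat -> T) : [seq f (val i) | i <- ords5] = mkseq f 5.
Proof. by []. Qed.
Arguments map_ords5 {T}.
Lemma map_ords4 T (f : nat -> T) : [seq f (val i) | i <- ords4] = mkseq f 4.
Proof. by []. Qed.
Arguments map_ords4 {T}.

Lemma decK c : okw c -> enc (dec c) = c.
Proof.
case/andP => /eqP Hs Ha; rewrite /enc /dec.
under eq_map => i do rewrite ffunE.
rewrite (map_ords5 (fun k => code (uncode (nth 0%N c k)))).
rewrite -[RHS](mkseq_nth 0%N c) Hs /mkseq; apply/eq_in_map => k.
rewrite mem_iota /= add0n => Hk; rewrite uncodeK //.
by apply: (allP Ha); apply: mem_nth; rewrite Hs.
Qed.

Lemma dec4K c : size c = 4%N -> enc4 (dec4 c) = c.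
Proof.
move=> Hs; rewrite /enc4 /dec4.
under eq_map => i do rewrite ffunE.
by rewrite (map_ords4 (nth false c)) -[RHS](mkseq_nth false c) Hs.
Qed.

Lemma enc_ok w : okw (enc w).
Proof. by rewrite /okw /enc /= !code_lt. Qed.

Definition cntA (c d : seq nat) : nat := count (fun p => antiN p.1 p.2) (zip c d).

Lemma sum5 (V : zmodType) (F : 'I_5 -> V) : \sum_(j < 5) F j = \sum_(j <- ords5) F j.
Proof. by rewrite -enum5 big_enum. Qed.

Lemma pcommuteE (k l : 'Z_4) (v w : {ffun 'I_5 -> letter}) :
  pcommute (k, v) (l, w) = ~~ odd (cntA (enc v) (enc w)).
Proof.
rewrite /pcommute /pmul /= xpair_eqE.
have -> : [ffun j => (lmul (v j) (w j)).2] = [ffun j => (lmul (w j) (v j)).2].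
  by apply/ffunP => j; rewrite !ffunE lmul2C.
rewrite eqxx andbT.
under eq_bigr do rewrite lmul1C.
rewrite big_split /= [k + l]addrC addrA -[X in _ == X]addr0 (inj_eq (addrI _)).
rewrite sum5 !big_cons big_nil /cntA /enc /= /antiN !codeK.
by case: (anti (v _) (w _)); case: (anti (v _) (w _)); case: (anti (v _) (w _));
  case: (anti (v _) (w _)); case: (anti (v _) (w _)); vm_compute.
Qed.

Definition gensC : seq (seq nat) :=
  [:: [:: 1; 3; 3; 1; 0]; [:: 0; 1; 3; 3; 1]; [:: 1; 0; 1; 3; 3]; [:: 3; 1; 0; 1; 3]]%N.
Definition synC (c : seq nat) : seq bool := [seq odd (cntA c g) | g <- gensC].

Lemma enc_word5 a0 a1 a2 a3 a4 :
  enc (word5 a0 a1 a2 a3 a4) = [:: code a0; code a1; code a2; code a3; code a4].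
Proof. by rewrite /enc /word5 /= !ffunE. Qed.

Lemma gensCE : gensC = [seq enc (gens5 i).2 | i <- ords4].
Proof. by rewrite /= !enc_word5. Qed.

Lemma synE k w : enc4 (syndrome gens5 (k, w)) = synC (enc w).
Proof.
rewrite /enc4 /syndrome; under eq_map do rewrite ffunE.
by rewrite /= !pcommuteE !enc_word5 !negbK.
Qed.

Definition wmulC (c d : seq nat) : seq nat := [seq mulN p.1 p.2 | p <- zip c d].
Arguments mulN : simpl never.
Definition Iw : seq nat := [:: 0; 0; 0; 0; 0]%N.

Lemma enc_pmul (g h : pauli 5) : enc (pmul g h).2 = wmulC (enc g.2) (enc h.2).
Proof. by rewrite /enc /pmul /= !ffunE /wmulC /= /mulN !codeK. Qed.

Lemma enc_pone : enc (pone 5).2 = Iw.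
Proof. by rewrite /enc /= !ffunE. Qed.

Fixpoint allB (n : nat) : seq (seq bool) :=
  if n is n'.+1 then [seq x :: s | x <- [:: false; true], s <- allB n'] else [:: [::]].
Fixpoint allW (n : nat) : seq (seq nat) :=
  if n is n'.+1 then [seq x :: s | x <- [:: 0; 1; 2; 3]%N, s <- allW n'] else [:: [::]].

Lemma mem_allB n s : (s \in allB n) = (size s == n).
Proof.
elim: n s => [|n IH] s; first by case: s.
have -> : allB n.+1 = [seq x :: s | x <- [:: false; true], s <- allB n] by [].
case: s => [|x s].
  by apply/negbTE/allpairsP => -[[y t] [_ _ /=]].
apply/allpairsP/idP => [[[y t] [_ Ht [-> ->]]]|Hs]; first by rewrite /= eqSS -IH.
by exists (x, s); split => //=; [case: (x) | rewrite IH -(eqSS _ n)].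
Qed.

Lemma mem_allW n s : (s \in allW n) = (size s == n) && all (fun x => x < 4)%N s.
Proof.
elim: n s => [|n IH] s; first by case: s.
have -> : allW n.+1 = [seq x :: s | x <- [:: 0; 1; 2; 3]%N, s <- allW n] by [].
case: s => [|x s].
  by apply/negbTE/allpairsP => -[[y t] [_ _ /=]].
apply/allpairsP/idP => [[[y t] [Hy Ht /= [-> ->]]]|].
  move: Ht; rewrite IH /= eqSS => /andP[-> ->]; move: Hy; rewrite !inE andbT.
  by rewrite /=; case/or4P => /eqP ->.
rewrite /= eqSS => /andP[Hs /andP[Hx Ha]].
exists (x, s); split => //=; last by rewrite IH Hs.
by move: Hx; case: x => [|[|[|[|]]]].
Qed.

Definition LC : seq (seq nat) := [seq foldr wmulC Iw (mask b gensC) | b <- allB 4].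

Definition GG := gen_group gens5.

Lemma GG_one : pone 5 \in GG.
Proof. by apply/bigcapP => A /andP[/andP[]]. Qed.
Lemma GG_gen i : gens5 i \in GG.
Proof. by apply/bigcapP => A /andP[_ /forallP]. Qed.
Lemma GG_mul g h : g \in GG -> h \in GG -> pmul g h \in GG.
Proof.
move=> /bigcapP Hg /bigcapP Hh; apply/bigcapP => A HA.
case/andP: (HA) => /andP[_ /forall_inP HM] _.
by have /forall_inP := HM g (Hg A HA); apply; apply: Hh.
Qed.

Lemma fold_in (cs : seq (seq nat)) : all (fun c => c \in gensC) cs ->
  exists2 s, s \in GG & enc s.2 = foldr wmulC Iw cs.
Proof.
elim: cs => [|c cs IH] /=; first by move=> _; exists (pone 5); [apply: GG_one | apply: enc_pone].
case/andP => Hc /IH [s Hs <-].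
move: Hc; rewrite gensCE => /mapP [i _ ->].
by exists (pmul (gens5 i) s); [apply: GG_mul => //; apply: GG_gen | rewrite enc_pmul].
Qed.

Lemma LCclosed : all (fun c => all (fun d => wmulC c d \in LC) LC) LC.
Proof. vm_compute. reflexivity. Qed.
Lemma IwLC : Iw \in LC.
Proof. vm_compute. reflexivity. Qed.
Lemma gensLC : all (fun c => c \in LC) gensC.
Proof. vm_compute. reflexivity. Qed.

Lemma GG_LC s : s \in GG -> enc s.2 \in LC.
Proof.
move/bigcapP => H.
have := H [set g : pauli 5 | enc g.2 \in LC]; rewrite inE; apply.
apply/andP; split.
  apply/andP; split; first by rewrite inE enc_pone IwLC.
  apply/forall_inP => g; rewrite inE => Hg; apply/forall_inP => h; rewrite inE => Hh.
  by rewrite inE enc_pmul; have /allP := allP LCclosed _ Hg; apply.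
apply/forallP => i; rewrite inE; apply: (allP gensLC).
by rewrite gensCE; apply: (map_f (fun j => enc (gens5 j).2) (mem4 i)).
Qed.

Lemma inSE x : in_S_up_to_phase gens5 x = (enc x.2 \in LC).
Proof.
apply/existsP/idP => [[k /existsP [s /andP [Hs /eqP ->]]] | HL].
  by rewrite /pscale /=; apply: GG_LC.
have [s0 Hs Hse] : exists2 s, s \in GG & enc s.2 = enc x.2.
  move/mapP: HL => [b _ ->]; apply: fold_in.
  by apply/allP => c /mem_mask.
exists (x.1 - s0.1); apply/existsP; exists s0; rewrite Hs /=.
by clear HL Hs; case: x Hse => [k w] /= /enc_inj <-; rewrite /pscale subrK; case: s0.
Qed.

Definition singC (j a : nat) : seq nat := mkseq (fun k => if k == j then a else 0%N) 5.
Definition E5C : seq (seq nat) :=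
  Iw :: [seq singC j a | j <- iota 0 5, a <- [:: 1; 2; 3]%N].

Lemma enc_single (j : 'I_5) a : enc (single j a).2 = singC j (code a).
Proof.
rewrite /enc /single /= !ffunE.
by case: j => [[|[|[|[|[|//]]]]] Hj]; case: a.
Qed.

Lemma pair_eqP (g : pauli 5) : g = (g.1, g.2). Proof. by case: g. Qed.

Lemma E5E g : (g \in E5) = (g.1 == 0) && (enc g.2 \in E5C).
Proof.
rewrite /E5 in_setU1 /E5C in_cons.
have -> : (g == pone 5) = (g.1 == 0) && (enc g.2 == Iw).
  by case: g => k w; rewrite xpair_eqE -enc_pone (inj_eq enc_inj).
have -> : (g \in [set single ja.1 ja.2 | ja : 'I_5 * letter & ja.2 != PI]) =
  (g.1 == 0) && (enc g.2 \in [seq singC j a | j <- iota 0 5, a <- [:: 1; 2; 3]%N]).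
  apply/imsetP/andP => [[[j a] Ha ->]|[/eqP H1 /allpairsP [[j a] [Hj Ha He]]]].
    split => //; rewrite enc_single; apply/allpairsP; exists (val j, code a); split => //.
      by rewrite mem_iota /= ltn_ord.
    by move: Ha; rewrite inE /= codePI; case: a.
  move: Hj; rewrite mem_iota /= add0n => Hj.
  move: Ha He; rewrite /= !inE => Ha He.
  exists (Ordinal Hj, uncode a); first by rewrite inE /= codePI;
    case/or3P: Ha => /eqP ->.
  rewrite [g]pair_eqP H1; congr pair; apply: enc_inj; rewrite He enc_single /= uncodeK //.
  by case/or3P: Ha => /eqP ->.
by case: (g.1 == 0).
Qed.

Lemma E5C_ok : all okw E5C. Proof. vm_compute. reflexivity. Qed.
Lemma E5C_uniq : uniq E5C. Proof. vm_compute. reflexivity. Qed.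

Lemma cardE5 : #|E5| = 16%N.
Proof.
rewrite cardE -(size_map (fun g : pauli 5 => enc g.2)).
have -> : 16%N = size E5C by [].
apply: perm_size; apply: uniq_perm; last 1 first.
- move=> c; apply/mapP/idP => [[g]|Hc].
    by rewrite mem_enum E5E => /andP[_ Hg] ->.
  exists (0, dec c); last by rewrite /= decK //; apply: (allP E5C_ok).
  by rewrite mem_enum E5E /= ?eqxx decK //; apply: (allP E5C_ok).
- rewrite map_inj_in_uniq ?enum_uniq // => g h.
  rewrite !mem_enum !E5E => /andP[/eqP H1 _] /andP[/eqP H2 _] /enc_inj H.
  by rewrite [g]pair_eqP [h]pair_eqP H1 H2 H.
- exact: E5C_uniq.
Qed.

Definition phiC (se : seq bool) : seq nat := head Iw [seq c <- E5C | synC c == se].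

Lemma head_filter (T : eqType) (x0 : T) (P : pred T) s :
  has P s -> P (head x0 (filter P s)) && (head x0 (filter P s) \in s).
Proof.
elim: s => [|x s IH] //=; case Px: (P x) => /=; first by rewrite Px mem_head.
by move/IH => /andP[-> H]; rewrite in_cons H orbT.
Qed.

Lemma E5C_cover : all (fun se => has (fun c => synC c == se) E5C) (allB 4).
Proof. vm_compute. reflexivity. Qed.
Lemma E5C_inj : all (fun c => all (fun d => (synC c == synC d) ==> (c == d)) E5C) E5C.
Proof. vm_compute. reflexivity. Qed.

Lemma phiC_spec e : (synC (phiC (enc4 e)) == enc4 e) && (phiC (enc4 e) \in E5C).
Proof.
apply: head_filter; apply: (allP E5C_cover).
by rewrite mem_allB size_map.
Qed.

Lemma E5_syn g : g \in E5 -> enc4 (syndrome gens5 g) = synC (enc g.2).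
Proof. by case: g => k w _; rewrite synE. Qed.

Lemma E5_unique g h : g \in E5 -> h \in E5 -> syndrome gens5 g = syndrome gens5 h -> g = h.
Proof.
move=> Hg Hh Hs.
have := congr1 enc4 Hs; rewrite (E5_syn _ Hg) (E5_syn _ Hh) => /eqP Hs'.
move: Hg Hh; rewrite !E5E => /andP[/eqP H1 Hg] /andP[/eqP H2 Hh].
have := implyP (allP (allP E5C_inj _ Hg) _ Hh) Hs' => /eqP /enc_inj H.
by rewrite [g]pair_eqP [h]pair_eqP H1 H2 H.
Qed.

Definition phiP e : pauli 5 := (0, dec (phiC (enc4 e))).

Lemma phiP_spec e : phiP e \in E5 /\ syndrome gens5 (phiP e) = e.
Proof.
case/andP: (phiC_spec e) => /eqP Hs Hin.
have Hok := allP E5C_ok _ Hin.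
split; first by rewrite E5E /= ?eqxx decK.
by apply: enc4_inj; rewrite synE decK.
Qed.

Lemma phi5E e : phi5 e = phiP e.
Proof.
rewrite /phi5; case: pickP => [g /andP[Hg /eqP Hs] | H] /=.
  by case: (phiP_spec e) => H1 H2; apply: E5_unique => //; rewrite Hs H2.
by case: (phiP_spec e) => H1 H2; move: (H (phiP e)); rewrite H1 H2 eqxx.
Qed.

Lemma enc_phi5 e : enc (phi5 e).2 = phiC (enc4 e).
Proof.
rewrite phi5E /= decK //; apply: (allP E5C_ok).
by case/andP: (phiC_spec e).
Qed.

Lemma part2 (e : {ffun 'I_4 -> bool}) : exists! g, g \in E5 /\ syndrome gens5 g = e.
Proof.
exists (phiP e); split; first exact: phiP_spec.
case: (phiP_spec e) => H1 H2 g [Hg Hs].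
by apply: E5_unique => //; rewrite Hs H2.
Qed.

Definition maskOf (m : {set 'I_5}) : seq bool := [seq i \in m | i <- ords5].
Definition condC (mk : seq bool) (c : seq nat) : bool :=
  all (fun p => p.1 || (p.2 == 0%N)) (zip mk c).
Definition WC (mk : seq bool) : seq (seq nat) := [seq c <- allW 5 | condC mk c].

Lemma PsetE m g : (g \in Pset m) = (g.1 == 0) && condC (maskOf m) (enc g.2).
Proof.
rewrite inE; congr andb.
transitivity (all (fun j => (j \notin m) ==> (g.2 j == PI)) ords5).
  by apply/forallP/allP => H j //; apply: H (mem5 j).
by rewrite /condC /maskOf /enc /= !codePI !implybE !negbK.
Qed.

Lemma WC_ok mk c : c \in WC mk -> okw c.
Proof. by rewrite mem_filter mem_allW => /andP[_ H]. Qed.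

Lemma SigmaE m e : (e \in Sigma gens5 m) = (enc4 e \in map synC (WC (maskOf m))).
Proof.
apply/imsetP/mapP => [[g Hg ->]|[c Hc He]].
  exists (enc g.2); last by case: g Hg => k w _; rewrite synE.
  by move: Hg; rewrite PsetE mem_filter mem_allW => /andP[_ ->]; apply: enc_ok.
have Hok := WC_ok _ _ Hc.
exists (0, dec c); first by rewrite PsetE /= ?eqxx decK //; move: Hc; rewrite mem_filter => /andP[].
by apply: enc4_inj; rewrite synE decK.
Qed.

Definition goodC (mk : seq bool) (se : seq bool) : bool :=
  let p := phiC se in all (fun c => (synC c == se) ==> (wmulC p c \in LC)) (WC mk).

Lemma goodE m e : good gens5 phi5 m e =
  (enc4 e \in map synC (WC (maskOf m))) && goodC (maskOf m) (enc4 e).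
Proof.
rewrite /good SigmaE; congr andb; rewrite /goodC.
apply/forall_inP/allP => [H c Hc|H g].
  have Hok := WC_ok _ _ Hc.
  apply/implyP => /eqP Hs.
  have := H (0, dec c); rewrite PsetE /= ?eqxx decK //.
  move: Hc; rewrite mem_filter => /andP[-> _] /(_ isT) /implyP.
  have -> : syndrome gens5 (0, dec c) == e by apply/eqP/enc4_inj; rewrite synE decK.
  by move/(_ isT); rewrite inSE enc_pmul enc_phi5 /= decK.
case: g => k w; rewrite PsetE /= => /andP[/eqP -> Hc].
apply/implyP => /eqP Hs.
have := H (enc w); rewrite mem_filter Hc mem_allW.
have /andP[-> ->] := enc_ok w; move/(_ isT)/implyP.
rewrite -(synE 0 w) Hs eqxx => /(_ isT).
by rewrite inSE enc_pmul enc_phi5.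
Qed.

Lemma card_enc4 (A : {set {ffun 'I_4 -> bool}}) (s : seq (seq bool)) :
  uniq s -> all (fun x => size x == 4%N) s -> (forall e, (e \in A) = (enc4 e \in s)) ->
  #|A| = size s.
Proof.
move=> Hu Hs HA; rewrite cardE -(size_map enc4).
apply: perm_size; apply: uniq_perm => //.
  by rewrite (map_inj_uniq enc4_inj) enum_uniq.
move=> x; apply/mapP/idP => [[e]|Hx]; first by rewrite mem_enum HA => H ->.
have Hx4 : size x = 4%N by apply/eqP; apply: (allP Hs).
by exists (dec4 x); rewrite ?dec4K // mem_enum HA dec4K.
Qed.

Lemma synC_size c : size (synC c) == 4%N. Proof. by rewrite size_map. Qed.

Definition cntS (mk : seq bool) : nat := size (undup (map synC (WC mk))).
Definition cntG (mk : seq bool) : nat :=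
  size [seq se <- undup (map synC (WC mk)) | goodC mk se].

Lemma cardSigma m : #|Sigma gens5 m| = cntS (maskOf m).
Proof.
apply: card_enc4; first exact: undup_uniq.
  by apply/allP => x; rewrite mem_undup => /mapP [c _ ->]; apply: synC_size.
by move=> e; rewrite SigmaE mem_undup.
Qed.

Lemma cardGood m :
  #|[set e in Sigma gens5 m | good gens5 phi5 m e]| = cntG (maskOf m).
Proof.
apply: card_enc4; first by rewrite filter_uniq // undup_uniq.
  by apply/allP => x; rewrite mem_filter mem_undup => /andP[_ /mapP [c _ ->]];
     apply: synC_size.
move=> e; rewrite inE goodE SigmaE mem_filter mem_undup.
by case: (enc4 e \in [seq synC i | i <- WC (maskOf m)]); rewrite ?andbF ?andbT.
Qed.

Lemma card_mask (m : {set 'I_5}) : #|m| = count id (maskOf m).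
Proof.
rewrite count_map.
have Hu : uniq [seq i <- ords5 | i \in m] by rewrite filter_uniq.
rewrite -size_filter -(card_uniqP Hu); apply: eq_card => i.
by rewrite mem_filter mem5 andbT.
Qed.

Lemma maskOf_inj : injective maskOf.
Proof.
move=> m m' /eq_in_map H; apply/setP => i; exact: H (mem5 i).
Qed.

Lemma allB5_uniq : uniq (allB 5). Proof. vm_compute. reflexivity. Qed.

Lemma sum_masks (F : seq bool -> rat) (t : nat) :
  \sum_(m : {set 'I_5} | #|m| == t) F (maskOf m) =
  \sum_(c <- allB 5 | count id c == t) F c.
Proof.
under eq_bigl do rewrite card_mask.
rewrite -(big_map maskOf (fun c => count id c == t) F).
apply: perm_big; apply: uniq_perm.
- by rewrite (map_inj_uniq maskOf_inj) index_enum_uniq.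
- exact: allB5_uniq.
move=> c; rewrite mem_allB; apply/mapP/idP => [[m _ ->]|/eqP Hc].
  by rewrite size_map.
exists [set i : 'I_5 | nth false c i]; first by rewrite mem_index_enum.
rewrite /maskOf; under eq_map do rewrite inE.
by rewrite (map_ords5 (nth false c)) -{1}Hc mkseq_nth.
Qed.

Lemma fSE t : fS gens5 phi5 t =
  (\sum_(c <- allB 5 | count id c == t) ((cntG c)%:R / (cntS c)%:R)) / 'C(5, t)%:R.
Proof.
rewrite /fS; congr (_ / _).
rewrite -(sum_masks (fun c => (cntG c)%:R / (cntS c)%:R)).
by apply: eq_bigr => m _; rewrite cardGood cardSigma.
Qed.

Lemma big_foldr (F : seq bool -> rat) (P : pred (seq bool)) r :
  \sum_(c <- r | P c) F c = foldr (fun c acc => if P c then F c + acc else acc) 0 r.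
Proof. by elim: r => [|x r IH]; rewrite ?big_nil // big_cons IH. Qed.

Lemma valE t : (\sum_(c <- allB 5 | count id c == t) ((cntG c)%:R / (cntS c)%:R)) / 'C(5, t)%:R =
  foldr (fun c acc => if count id c == t then (cntG c)%:R / (cntS c)%:R + acc else acc) 0 (allB 5)
  / 'C(5, t)%:R :> rat.
Proof. by rewrite big_foldr. Qed.

Lemma v2 : fS gens5 phi5 2 = 7%:R / 16%:R.
Proof. rewrite fSE valE; apply/eqP. vm_compute. reflexivity. Qed.

Theorem mainTheorem2 :
  #|E5| = 16%N /\
  (forall e : {ffun 'I_4 -> bool}, exists! g, g \in E5 /\ syndrome gens5 g = e) /\
  fS gens5 phi5 0 = 1 /\ fS gens5 phi5 1 = 1 /\
  fS gens5 phi5 2 = 7%:R / 16%:R /\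
  fS gens5 phi5 3 = 0 /\ fS gens5 phi5 4 = 0 /\ fS gens5 phi5 5 = 0.
Proof.
split; first exact: cardE5.
split; first exact: part2.
split; first by rewrite fSE valE; apply/eqP; vm_compute; reflexivity.
split; first by rewrite fSE valE; apply/eqP; vm_compute; reflexivity.
split; first exact: v2.
split; first by rewrite fSE valE; apply/eqP; vm_compute; reflexivity.
split; first by rewrite fSE valE; apply/eqP; vm_compute; reflexivity.
by rewrite fSE valE; apply/eqP; vm_compute; reflexivity.
Qed.
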